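(* Let $p>5$ be a prime, $q=p^h$, and let $\mathcal{F}$ be the projective closure of $ax^n+by^m=1$ over $\mathbb{F}_q$, with $a,b\in\mathbb{F}_q^*$ and $m,n$ positive integers with $n\ge m>2$. If $p\mid(2n-1)$ and $p\mid(m-1)$, then $\mathcal{F}$ is $\mathbb{F}_q$-Frobenius classical with respect to conics.
   Context: With $\varphi_0,\dots,\varphi_5$ the monomials of degree 2 in $x,y,1$, $\tau$ separating and $D^{(k)}_\tau$ Hasse derivatives, the $\mathbb{F}_q$-Frobenius order sequence w.r.t. conics is the lexicographically smallest $\nu_0<\dots<\nu_4$ such that the $6\times6$ determinant with first row $(\varphi_j^q)_j$ and rows $(D^{(\nu_i)}_\tau\varphi_j)_j$ is nonzero; the curve is $\mathbb{F}_q$-Frobenius classical w.r.t. conics if $\nu_i=i$ for all $i$. *)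

(* Defs.v *)
From HB Require Import structures.
From mathcomp Require Import all_boot all_order all_algebra.
Set Implicit Arguments. Unset Strict Implicit. Unset Printing Implicit Defensive.
Import Order.TTheory GRing.Theory Num.Theory.
Local Open Scope ring_scope.

(* Function field setting: F = F_q, K a field containing F (via iota),
   x y in K with x transcendental over F.  The subfield F(x,y) of K is then
   the function field of the curve, and [D] is a Hasse derivation
   (w.r.t. the separating variable tau = x). *)

Definition transcendental_over (F K : fieldType) (iota : {rmorphism F -> K})
  (x : K) : Prop :=
  forall P : {poly F}, P != 0 -> (map_poly iota P).[x] != 0.

Definition hasse_derivation_wrt (F K : fieldType) (iota : {rmorphism F -> K})
  (x : K) (D : nat -> K -> K) : Prop :=
  (forall u, D 0%N u = u) /\
  (forall k u v, D k (u + v) = D k u + D k v) /\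
  (forall k u v, D k (u * v) = \sum_(i < k.+1) D i u * D (k - i)%N v) /\
  (forall k c, (0 < k)%N -> D k (iota c) = 0) /\
  D 1%N x = 1 /\
  (forall k, (1 < k)%N -> D k x = 0).

Definition conic_monomials (K : fieldType) (x y : K) : 'I_6 -> K :=
  fun j => nth 0 [:: 1; x; y; x ^+ 2; x * y; y ^+ 2] j.

Definition frobenius_mx (K : fieldType) (q : nat) (D : nat -> K -> K)
  (phi : 'I_6 -> K) (nu : 'I_5 -> nat) : 'M[K]_6 :=
  \matrix_(i < 6, j < 6)
     match unlift ord0 i with
     | Some i' => D (nu i') (phi j)
     | None => phi j ^+ q
     end.

Definition strictly_increasing5 (nu : 'I_5 -> nat) : Prop :=
  forall i j : 'I_5, (i < j)%N -> (nu i < nu j)%N.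

Definition frob_admissible (K : fieldType) (q : nat) (D : nat -> K -> K)
  (phi : 'I_6 -> K) (nu : 'I_5 -> nat) : Prop :=
  strictly_increasing5 nu /\ \det (frobenius_mx q D phi nu) != 0.

Definition lex_lt5 (nu mu : 'I_5 -> nat) : Prop :=
  exists k : 'I_5, (forall i : 'I_5, (i < k)%N -> nu i = mu i) /\ (nu k < mu k)%N.

Definition is_frobenius_orders (K : fieldType) (q : nat) (D : nat -> K -> K)
  (phi : 'I_6 -> K) (nu : 'I_5 -> nat) : Prop :=
  frob_admissible q D phi nu /\
  forall mu, frob_admissible q D phi mu -> (forall i, nu i = mu i) \/ lex_lt5 nu mu.

Definition frobenius_classical_conics (K : fieldType) (q : nat)
  (D : nat -> K -> K) (x y : K) : Prop :=
  is_frobenius_orders q D (conic_monomials x y) (fun i : 'I_5 => (i : nat)).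

(* Main.v *)
Require Import Defs.
From HB Require Import structures.
From mathcomp Require Import all_boot all_order all_algebra all_field.
From mathcomp Require Import ring zify.
Import GRing.Theory.
Local Open Scope ring_scope.

Lemma D_exp_coef (K : fieldType) (D : nat -> K -> K) (N : nat) :
  (forall u, D 0%N u = u) -> (forall k, (0 < k)%N -> D k 1 = 0) ->
  (forall k u v, D k (u * v) = \sum_(i < k.+1) D i u * D (k - i)%N v) ->
  forall w e i, (i < N)%N -> D i (w ^+ e) = ((\poly_(j < N) D j w) ^+ e)`_i.
Proof.
move=> H0 H1 HM w e; elim: e => [|e IH] i hi.
  rewrite !expr0 coef1; case: i hi => [|i] hi /=; [by rewrite H0 | by rewrite H1].
rewrite exprSr HM exprSr coefM; apply: eq_bigr => j _.
have hj : (j < N)%N by apply: leq_ltn_trans hi; rewrite -ltnS.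
rewrite IH // coef_poly.
by rewrite (leq_ltn_trans (leq_subr _ _) hi).
Qed.

Lemma D_frob (K : fieldType) (D : nat -> K -> K) (p : nat) :
  p \in [pchar K] ->
  (forall u, D 0%N u = u) -> (forall k, (0 < k)%N -> D k 1 = 0) ->
  (forall k u v, D k (u * v) = \sum_(i < k.+1) D i u * D (k - i)%N v) ->
  forall w i, (0 < i < p)%N -> D i (w ^+ p) = 0.
Proof.
move=> chp H0 H1 HM w i /andP[i0 ip].
have p0 : (0 < p)%N by apply: prime_gt0; apply: (pcharf_prime chp).
rewrite (@D_exp_coef K D p) //.
have eP : \poly_(j < p) D j w = w%:P + 'X * \poly_(j < p.-1) D j.+1 w.
  apply/polyP => k; rewrite coefD coefC coefXM !coef_poly.
  case: k => [|k] /=; first by rewrite p0 H0 addr0.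
  have e : forall p', (0 < p')%N -> (k < p'.-1)%N = (k.+1 < p')%N by case.
  by rewrite add0r e.
have chP : p \in [pchar {poly K}] by rewrite pchar_poly.
rewrite eP -(pFrobenius_autE chP) pFrobenius_autD_comm; last exact: mulrC.
rewrite !pFrobenius_autE exprMn -rmorphXn coefD coefC coefXnM ip.
by rewrite addr0 -[i == 0]negbK -lt0n i0.
Qed.
Lemma size_binom_exp (F : fieldType) (c : F) k e : c != 0 -> (0 < k)%N ->
  (size ((1 - c%:P * 'X^k) ^+ e)).-1 = (k * e)%N.
Proof.
move=> c0 k0; rewrite size_exp.
have -> : size (1 - c%:P * 'X^k) = k.+1.
  rewrite addrC size_polyDl size_polyN size_Cmul // ?size_polyXn //.
  by rewrite size_poly1.
by [].
Qed.

Lemma solve_lin (K : fieldType) (u t r : K) : u != 0 -> u * t + r = 0 -> t = - r / u.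
Proof.
move=> u0 e; have -> : r = - (u * t) by apply/eqP; rewrite -addr_eq0 addrC e.
by rewrite opprK mulrC mulKf.
Qed.
Lemma lex_part mu : strictly_increasing5 mu ->
  (forall i, (fun i : 'I_5 => (i : nat)) i = mu i) \/ lex_lt5 (fun i : 'I_5 => (i : nat)) mu.
Proof.
move=> Hmu.
have ge : forall i : 'I_5, (i <= mu i)%N.
  suff H : forall k (hk : (k < 5)%N), (k <= mu (Ordinal hk))%N by case=> k hk; apply: H.
  elim=> [|k IH] hk //.
  have hk' : (k < 5)%N by apply: ltnW.
  by apply: leq_ltn_trans (IH hk') _; apply: Hmu.
case: (boolP [forall i, mu i == i]) => [/forallP H|].
  by left=> i; rewrite (eqP (H i)).
rewrite negb_forall => /existsP [i0 Hi0].
have exn : exists k, (k < 5)%N && (mu (inord k) != k).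
  by exists i0; rewrite ltn_ord inord_val.
case: (ex_minnP exn) => k /andP[k5 hk] kmin.
right; exists (inord k); split.
- move=> i; rewrite inordK // => ik /=.
  apply/eqP; rewrite eq_sym; apply/negPn/negP => ne.
  have := kmin i; rewrite ltn_ord inord_val ne => /(_ isT).
  by rewrite leqNgt ik.
- have := ge (inord k); rewrite /= inordK // => g.
  by rewrite ltn_neqAle g eq_sym hk.
Qed.
Lemma deg_contra : forall n m r q N : nat, (m <= n)%N -> (2 < m)%N -> (0 < r)%N -> q = (2 * r + 1)%N -> N = (m - 1 + q)%N -> (n * N)%N = ((n + r) * m)%N -> False.
move=> n m r q N mn m2 r0 qr hN E.
have hN' : N = (m + 2 * r)%N by lia.
rewrite hN' mulnDr mulnDl in E.
have h1 : (r * m <= r * n)%N by rewrite leq_mul2l mn orbT.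
have h2 : (r * n < n * (2 * r))%N by rewrite mulnA mulnC ltn_pmul2r // ltn_Pmulr //; lia.
lia.
Qed.

Lemma sum6 (K : fieldType) (G : 'I_6 -> K) :
  \sum_(i < 6) G i = G (inord 0) + G (inord 1) + G (inord 2) + G (inord 3)
     + G (inord 4) + G (inord 5).
Proof.
rewrite (eq_bigr (fun i => G (inord (nat_of_ord i)))); last by move=> i _; rewrite inord_val.
by rewrite !big_ord_recl big_ord0 !lift0 /= addr0 !addrA.
Qed.

Lemma MEntry (K : fieldType) q (D : nat -> K -> K) (x y : K) (k l : nat) :
  (k < 6)%N -> (l < 6)%N ->
  frobenius_mx q D (conic_monomials x y) (fun i : 'I_5 => (i : nat)) (inord k) (inord l)
  = if k is k'.+1 then D k' (nth 0 [:: 1; x; y; x ^+ 2; x * y; y ^+ 2] l)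
    else (nth 0 [:: 1; x; y; x ^+ 2; x * y; y ^+ 2] l) ^+ q.
Proof.
move=> hk hl; rewrite /frobenius_mx mxE /conic_monomials inordK //.
case: k hk => [|k] hk.
  have -> : (inord 0 : 'I_6) = ord0 by apply: val_inj; rewrite /= inordK.
  by rewrite unlift_none.
have -> : (inord k.+1 : 'I_6) = lift ord0 (inord k : 'I_5).
  by apply: val_inj; rewrite /= /bump /= !inordK.
by rewrite liftK /= inordK.
Qed.

Theorem proposition3p13
  (p h : nat) (F : finFieldType) (K : fieldType) (iota : {rmorphism F -> K})
  (a b : F) (n m : nat) (x y : K) (D : nat -> K -> K) :
  prime p -> (5 < p)%N -> #|F| = (p ^ h)%N ->
  a != 0 -> b != 0 ->
  (m <= n)%N -> (2 < m)%N ->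
  (p %| (2 * n - 1))%N -> (p %| (m - 1))%N ->
  transcendental_over iota x ->
  iota a * x ^+ n + iota b * y ^+ m = 1 ->
  hasse_derivation_wrt iota x D ->
  frobenius_classical_conics (p ^ h)%N D x y.
Proof.
move=> pr p5 cardF a0 b0 mn m2 dn dm tr rel [HD0 [HDadd [HDmul [HDc [HDx1 HDx]]]]].
have h0 : (0 < h)%N.
  case: h cardF => // cF; have := finNzRing_gt1 F; by rewrite cF expn0.
have chF : p \in [pchar F] := card_finPcharP cardF pr.
have chK : p \in [pchar K] by rewrite (fmorph_pchar iota).
have H1 : forall k, (0 < k)%N -> D k 1 = 0 by move=> k k0; rewrite -(rmorph1 iota) HDc.
have Dz : forall k, D k 0 = 0.
  move=> k; have e := HDadd k 0 0; rewrite addr0 in e.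
  by apply: (@addrI _ (D k 0)); rewrite addr0 -e.
have DN : forall k u, D k (- u) = - D k u.
  by move=> k u; apply/eqP; rewrite -addr_eq0 -HDadd addNr Dz.
pose isC c := forall j, (0 < j < p)%N -> D j c = 0.
have isCi : forall c, isC (iota c) by move=> c j /andP[j0 _]; exact: HDc.
have isCp : forall w, isC (w ^+ p) by move=> w j hj; exact: (@D_frob K D p chK HD0 H1 HDmul).
have isCM : forall c1 c2, isC c1 -> isC c2 -> isC (c1 * c2).
  move=> c1 c2 hc1 hc2 j /andP[j0 jp]; rewrite HDmul big_ord_recl subn0 hc2 ?j0 //.
  rewrite mulr0 add0r; apply: big1 => i _; rewrite hc1 ?mul0r // lift0 /=.
  exact: leq_ltn_trans (ltn_ord i) jp.
have Dc : forall c v k, isC c -> (k < p)%N -> D k (c * v) = c * D k v.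
  move=> c v k hc kp; rewrite HDmul big_ord_recl HD0 subn0 big1 ?addr0 // => i _.
  rewrite hc ?mul0r // lift0 /=; exact: leq_ltn_trans (ltn_ord i) kp.
have n1 : (1 <= n)%N by lia.
case/dvdnP: dn => t et.
case/dvdnP: dm => s0 es.
set X1 := x ^+ (2 * n - 1).
set Y := y ^+ (m - 1).
have isCX1 : isC X1 by rewrite /X1 et exprM.
have isCY : isC Y by rewrite /Y es exprM.
set c1 := iota (- a ^+ 2) * X1.
set c2 := iota (- (b *+ 2)) * Y.
set c5 := iota (b ^+ 2) * Y ^+ 2.
have isC1 : isC c1 by apply: (isCM).
have isC2 : isC c2 by apply: (isCM).
have isC5 : isC c5 by apply: (isCM) => //; rewrite expr2; apply: (isCM).
have ey : y ^+ m = Y * y by rewrite /Y -exprSr subn1 prednK //; lia.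
have ex : X1 * x = x ^+ n * x ^+ n by rewrite /X1 -exprSr -exprD; congr (_ ^+ _); lia.
have rel0 : 1 + c1 * x + c2 * y + c5 * y ^+ 2 = 0.
  have e1 : 1 - iota b * (Y * y) = iota a * x ^+ n by rewrite -ey -rel addrK.
  rewrite /c1 /c2 /c5 -mulrA ex !rmorphN !rmorphXn rmorphMn.
  transitivity ((1 - iota b * (Y * y)) ^+ 2 - (iota a * x ^+ n) ^+ 2); first by ring.
  by rewrite e1 subrr.
have kern : forall k, (k < 5)%N -> D k 1 * 1 + D k x * c1 + D k y * c2 + D k (x ^+ 2) * 0
    + D k (x * y) * 0 + D k (y ^+ 2) * c5 = 0.
  move=> k k5; have kp : (k < p)%N by lia.
  have e := congr1 (D k) rel0.
  rewrite Dz !HDadd (Dc _ _ _ isC1 kp) (Dc _ _ _ isC2 kp) (Dc _ _ _ isC5 kp) in e.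
  apply: etrans e; ring.
have podd : odd p by case: (even_prime pr) => // p2; rewrite p2 in p5.
have qodd : odd (p ^ h)%N by rewrite oddX podd orbT.
have qp : (p <= p ^ h)%N by rewrite -{1}(expn1 p) leq_pexp2l // prime_gt0.
set q := (p ^ h)%N in qodd qp *.
set r := q./2.
have qr : q = (2 * r + 1)%N by rewrite -[LHS]odd_double_half qodd -mul2n addnC.
have r0 : (0 < r)%N by lia.
have bq : iota b ^+ q = iota b by rewrite -rmorphXn /q -cardF expf_card.
have xn0 : x != 0.
  have := tr 'X; rewrite polyX_eq0 map_polyX hornerX; exact.
have sne : (1 - iota b * (Y * y ^+ q)) ^+ 2 - iota a ^+ 2 * (X1 * x ^+ q) != 0.
  set N := (m - 1 + q)%N.
  have eYq : Y * y ^+ q = y ^+ N by rewrite /Y -exprD.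
  have eXq : X1 * x ^+ q = (x ^+ (n + r)) ^+ 2.
    by rewrite /X1 -exprD -exprM; congr (_ ^+ _); lia.
  rewrite eYq eXq -exprMn subr_eq0 eqf_sqr.
  apply/negP => /orP H.
  have [e [e0 he]] : exists e : F, e != 0 /\ 1 - iota b * y ^+ N = iota (e * a) * x ^+ (n + r).
    case: H => /eqP he; [exists 1 | exists (-1)]; rewrite ?oner_eq0 ?oppr_eq0 ?oner_eq0;
      split=> //; rewrite he ?mul1r ?rmorphM ?rmorphN1 //; ring.
  have hbm : iota b * y ^+ m = 1 - iota a * x ^+ n by rewrite -rel; ring.
  have hb : iota b * y ^+ N = 1 - iota (e * a) * x ^+ (n + r) by rewrite -he; ring.
  have key : (1 - iota a * x ^+ n) ^+ N = (1 - iota (e * a) * x ^+ (n + r)) ^+ m.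
    rewrite -hb -hbm !exprMn -!exprM mulnC; congr (_ * _).
    by rewrite /N exprD bq -exprSr subn1 prednK //; lia.
  pose P := (1 - a%:P * 'X^n) ^+ N - (1 - (e * a)%:P * 'X^(n + r)) ^+ m.
  have PZ : P = 0.
    apply/eqP/negPn/negP => /tr.
    rewrite /P rmorphB !rmorphXn !rmorphB !rmorph1 !rmorphM /= !map_polyC !map_polyXn !hornerE.
    by rewrite -rmorphM key subrr eqxx.
  have {}PZ := subr0_eq PZ.
  have := congr1 (fun Q : {poly F} => (size Q).-1) PZ.
  rewrite /= !size_binom_exp ?mulf_neq0 ?addn_gt0 ?n1 //.
  exact: (deg_contra _ _ _ _ _ mn m2 r0 qr erefl).
have two0 : (2%:R : K) != 0.
  apply/negP; rewrite -(dvdn_pcharf chK) => /dvdn_leq; move=> /(_ isT); lia.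
set z := iota a * x ^+ n.
have z0 : z != 0 by rewrite mulf_neq0 ?fmorph_eq0 ?expf_neq0.
have ez : z + (iota b * Y) * y = 1 by rewrite /z -mulrA -ey.
have isCbY : isC (iota b * Y) by apply: (isCM).
have Dzk : forall k, (0 < k < 5)%N -> D k z = - (iota b * Y) * D k y.
  move=> k /andP[k0 k5]; have kp : (k < p)%N by lia.
  have e := congr1 (D k) ez; rewrite HDadd H1 // (Dc _ _ _ isCbY kp) in e.
  by rewrite mulNr; apply/eqP; rewrite -addr_eq0 e.
set E' := iota a ^+ 2 * X1.
have zz : z * z = E' * x by rewrite /E' -mulrA ex /z; ring.
have isCE : isC E' by apply: (isCM) => //; rewrite -rmorphXn.
have Dzz : forall k, (k < 5)%N -> D k (z * z) = E' * D k x.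
  by move=> k k5; rewrite zz Dc //; lia.
have e1 := Dzz 1%N isT.
rewrite HDmul !big_ord_recl big_ord0 !lift0 /= !subSS !subn0 HD0 HDx1 in e1.
have e2 := Dzz 2%N isT.
rewrite HDmul !big_ord_recl big_ord0 !lift0 /= !subSS !subn0 HD0 HDx // in e2.
have e3 := Dzz 3%N isT.
rewrite HDmul !big_ord_recl big_ord0 !lift0 /= !subSS !subn0 HD0 HDx // in e3.
have e4 := Dzz 4%N isT.
rewrite HDmul !big_ord_recl big_ord0 !lift0 /= !subSS !subn0 HD0 HDx // in e4.
have E0 : E' != 0.
  apply/negP => /eqP E0; move: z0.
  have : z * z == 0 by rewrite zz E0 mul0r.
  by rewrite mulf_eq0 orbb => ->.
have z20 : 2%:R * z != 0 by rewrite mulf_neq0.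
have hz1 : D 1%N z = - (- E') / (2%:R * z).
  apply: solve_lin => //; rewrite -(mulr1 E') -e1; ring.
have hz2 : D 2%N z = - (D 1%N z ^+ 2) / (2%:R * z).
  apply: solve_lin => //; transitivity (E' * 0); last by rewrite mulr0.
  rewrite -e2; ring.
have hz3 : D 3%N z = - (2%:R * D 1%N z * D 2%N z) / (2%:R * z).
  apply: solve_lin => //; transitivity (E' * 0); last by rewrite mulr0.
  rewrite -e3; ring.
have hz4 : D 4%N z = - (2%:R * D 1%N z * D 3%N z + D 2%N z ^+ 2) / (2%:R * z).
  apply: solve_lin => //; transitivity (E' * 0); last by rewrite mulr0.
  rewrite -e4; ring.
have key : D 3%N z ^+ 2 - D 2%N z * D 4%N z = - E' ^+ 6 / ((2%:R) ^+ 10 * z ^+ 10).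
  rewrite hz4 hz3 hz2 hz1; field.
  rewrite z0 two0 andbT /=.
  by rewrite (_ : 1024%:R = (2%:R : K) ^+ 10) ?expf_neq0 // -natrX.
have keynz : D 3%N z ^+ 2 - D 2%N z * D 4%N z != 0.
  rewrite key mulf_neq0 //; first by rewrite oppr_eq0 expf_neq0.
  by rewrite invr_eq0 mulf_neq0 // expf_neq0.
have ynz : D 3%N y ^+ 2 - D 2%N y * D 4%N y != 0.
  apply/negP => /eqP hy; move/negP: keynz; apply; apply/eqP; rewrite !Dzk //.
  transitivity ((iota b * Y) ^+ 2 * (D 3%N y ^+ 2 - D 2%N y * D 4%N y)); first by ring.
  by rewrite hy mulr0.
split; last first.
  by move=> mu [mu_inc _]; apply: lex_part.
split; first by move=> i j.
apply/negP => /det0P [v v0 vM].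
pose M := frobenius_mx q D (conic_monomials x y) (fun i : 'I_5 => (i : nat)).
have Ecol : forall l, (l < 6)%N -> \sum_(i < 6) v 0 i * M i (inord l) = 0.
  move=> l hl; have := congr1 (fun A : 'M[K]_(1,6) => A 0 (inord l)) vM.
  by rewrite /= [in RHS]mxE mxE.
pose c : 'cV[K]_6 := \col_(j < 6) nth 0 [:: 1; c1; c2; 0; 0; c5] j.
have Ec : \sum_(i < 6) v 0 i * (M *m c) i 0 = 0.
  by have := congr1 (fun A : 'M[K]_(1,6) => (A *m c) 0 0) vM; rewrite /= mul0mx -mulmxA [in RHS]mxE mxE.
rewrite sum6 !mxE !sum6 /M !MEntry // !mxE !inordK //= in Ec.
rewrite !kern // !mulr0 !addr0 in Ec.
have w0 : v 0 (inord 0) = 0.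
  move/eqP: Ec; rewrite mulf_eq0 => /orP[/eqP //|/eqP S0].
  exfalso; move/negP: sne; apply; apply/eqP.
  rewrite expr1n -exprM mulnC exprM in S0.
  rewrite -S0 /c1 /c2 /c5 !rmorphN !rmorphXn rmorphMn; ring.
have [Dx22 [Dx23 Dx24]] : D 2%N (x ^+ 2) = 1 /\ D 3%N (x ^+ 2) = 0 /\ D 4%N (x ^+ 2) = 0.
  by rewrite expr2 !HDmul !big_ord_recl !big_ord0 !lift0 /= !subSS !subn0 !HD0 !HDx1 !HDx //;
    split; [|split]; ring.
have Dxy : forall k, (0 < k < 5)%N -> D k (x * y) = x * D k y + D k.-1 y.
  move=> k /andP[k1 k5]; rewrite HDmul.
  case: k k1 k5 => [|[|[|[|[|k]]]]] // _ _;
    rewrite !big_ord_recl big_ord0 !lift0 /= !subSS !subn0 HD0 HDx1 ?HDx //; ring.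
have C0 := Ecol 0%N isT; have C1 := Ecol 1%N isT; have C2 := Ecol 2%N isT.
have C3 := Ecol 3%N isT; have C4 := Ecol 4%N isT.
rewrite sum6 /M !MEntry //= in C0.
rewrite sum6 /M !MEntry //= in C1.
rewrite sum6 /M !MEntry //= in C2.
rewrite sum6 /M !MEntry //= in C3.
rewrite sum6 /M !MEntry //= in C4.
rewrite w0 HD0 !H1 // !(mul0r, mulr0, add0r, addr0, mulr1) in C0.
rewrite w0 C0 HD0 HDx1 !HDx // !(mul0r, mulr0, add0r, addr0, mulr1) in C1.
rewrite w0 C0 C1 HD0 Dx22 Dx23 Dx24 !(mul0r, mulr0, add0r, addr0, mulr1) in C3.
rewrite w0 C0 C1 C3 HD0 !(mul0r, mulr0, add0r, addr0, mulr1) in C2.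
rewrite w0 C0 C1 C3 HD0 !Dxy // !(mul0r, mulr0, add0r, addr0, mulr1) /= in C4.
have w4 : v 0 (inord 4) * (D 3%N y ^+ 2 - D 2%N y * D 4%N y) = 0.
  have := congr2 (fun s t => D 3%N y * s - D 4%N y * (t - x * s)) C2 C4 => /= H.
  transitivity (D 3%N y * 0 - D 4%N y * (0 - x * 0)); last by ring.
  rewrite -H; ring.
have w5 : v 0 (inord 5) * (D 3%N y ^+ 2 - D 2%N y * D 4%N y) = 0.
  have := congr2 (fun s t => D 3%N y * (t - x * s) - D 2%N y * s) C2 C4 => /= H.
  transitivity (D 3%N y * (0 - x * 0) - D 2%N y * 0); last by ring.
  rewrite -H; ring.
move/eqP: w4; rewrite mulf_eq0 (negbTE ynz) orbF => /eqP w4.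
move/eqP: w5; rewrite mulf_eq0 (negbTE ynz) orbF => /eqP w5.
move/negP: v0; apply; apply/eqP/rowP => i; rewrite mxE -[i]inord_val.
case: i => [[|[|[|[|[|[|k]]]]]] hk] //=.
Qed.
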